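(* Let $\lambda_1,\lambda_2,\sigma_1,\sigma_2\in\mathbb{C}^*$ and $\eta_1,\eta_2\in\mathbb{C}$ with $\lambda_1\neq\lambda_2$. Let $v$ be a nonzero element of $\Omega(\lambda_1,\eta_1,\sigma_1,0)\otimes\Omega(\lambda_2,\eta_2,\sigma_2,0)$ with $\deg(v)=(p',q',s',t')$. Then: (1) if $p'>0$, then $\deg(I_0v-\sigma_1v-\sigma_2v)=(p'-1,q',s',t')$; (2) if $p'=0$ and $q'>0$, then there exists $m\in\mathbb{Z}$ with $\deg(I_mv-\lambda_1^m\sigma_1v-\lambda_2^m\sigma_2v)=(0,q'-1,s',t')$; (3) if $p'=q'=0$ and $s'>0$, then there exists $m\in\mathbb{Z}$ with $\deg(I_mv-\lambda_1^m\sigma_1v-\lambda_2^m\sigma_2v)=(0,0,s'-1,t')$; (4) if $p'=q'=s'=0$ and $t'>0$, then there exists $m\in\mathbb{Z}$ with $\deg(I_mv-\lambda_1^m\sigma_1v-\lambda_2^m\sigma_2v)=(0,0,0,t'-1)$.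
   Context: The planar Galilean conformal algebra $\mathcal{G}$ is the complex Lie algebra with basis $\{L_m,H_m,I_m,J_m\mid m\in\mathbb{Z}\}$ and brackets $[L_m,L_n]=(n-m)L_{m+n}$, $[L_m,H_n]=nH_{m+n}$, $[L_m,I_n]=(n-m)I_{m+n}$, $[L_m,J_n]=(n-m)J_{m+n}$, $[H_m,I_n]=I_{m+n}$, $[H_m,J_n]=-J_{m+n}$, and $[H_m,H_n]=[I_m,I_n]=[J_m,J_n]=[I_m,J_n]=0$ for all $m,n\in\mathbb{Z}$. For $\lambda,\sigma\in\mathbb{C}^*$, $\eta\in\mathbb{C}$, the module $\Omega(\lambda,\eta,\sigma,0)$ is a polynomial algebra in two variables with $L_m f(X,Y)=\lambda^m(Y-mX+m\eta)f(X,Y-m)$, $H_m f(X,Y)=\lambda^m X f(X,Y-m)$, $I_m f(X,Y)=\lambda^m\sigma f(X-1,Y-m)$, $J_m f(X,Y)=0$. Here $\Omega(\lambda_1,\eta_1,\sigma_1,0)=\mathbb{C}[X,Y]$ and $\Omega(\lambda_2,\eta_2,\sigma_2,0)=\mathbb{C}[X_1,Y_1]$ (same formulas with $X_1,Y_1$). The tensor product has action $x(v\otimes w)=xv\otimes w+v\otimes xw$. Total order $\succ$ on $\mathbb{N}^4$: with $\mathbf{w}(\bar\alpha)=\alpha_1+\alpha_2+\alpha_3+\alpha_4$, $\bar\alpha\succ\bar\beta$ iff $\mathbf{w}(\bar\alpha)>\mathbf{w}(\bar\beta)$, or the weights are equal and $(\alpha_4,\alpha_3,\alpha_2,\alpha_1)$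 is lexicographically larger than $(\beta_4,\beta_3,\beta_2,\beta_1)$. For nonzero $v=\sum\beta_{ijkl}X^iY^j\otimes X_1^kY_1^l$, $\mathrm{Supp}(v)=\{(i,j,k,l)\mid\beta_{ijkl}\neq0\}$ and $\deg(v)$ is the $\succ$-maximal element of $\mathrm{Supp}(v)$. *)

(* Defs.v *)
From mathcomp Require Import all_boot all_algebra.
From mathcomp Require Import Rstruct.
From mathcomp.real_closed Require Import complex.
From mathcomp Require Import mpoly.
Set Implicit Arguments. Unset Strict Implicit. Unset Printing Implicit Defensive.
Import GRing.Theory.
Local Open Scope ring_scope.

Definition CC : numClosedFieldType := complex Rdefinitions.R.

(* Omega(l1,e1,s1,0) (x) Omega(l2,e2,s2,0) = C[X,Y] (x) C[X1,Y1], identified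
   with C[X,Y,X1,Y1]; variables 0,1,2,3 stand for X, Y, X1, Y1, and
   X^i Y^j (x) X1^k Y1^l is the monomial with exponent (i,j,k,l). *)
Definition TP := {mpoly CC[4]}.

Definition var (i : nat) : TP := 'X_(inord i).

Definition shift1 (m : int) (f : TP) : TP :=
  f \mPo [tuple var 0 - 1; var 1 - m%:~R; var 2; var 3].
Definition shift2 (m : int) (f : TP) : TP :=
  f \mPo [tuple var 0; var 1; var 2 - 1; var 3 - m%:~R].

(* Action of I_m on the tensor product: I_m (f (x) g) = I_m f (x) g + f (x) I_m g,
   with I_m f(X,Y) = lambda^m sigma f(X-1,Y-m). *)
Definition actI (l1 s1 l2 s2 : CC) (m : int) (v : TP) : TP :=
  (l1 ^ m * s1) *: shift1 m v + (l2 ^ m * s2) *: shift2 m v.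

Definition mk4 (a b c d : nat) : 'X_{1..4} := Multinom [tuple a; b; c; d].
Definition e4 (a : 'X_{1..4}) (i : nat) : nat := a (inord i).

Definition wt (a : 'X_{1..4}) : nat := e4 a 0 + e4 a 1 + e4 a 2 + e4 a 3.

Definition lexgt4 (a b : 'X_{1..4}) : bool :=
  (e4 b 3 < e4 a 3)%N ||
  ((e4 a 3 == e4 b 3) && ((e4 b 2 < e4 a 2)%N ||
  ((e4 a 2 == e4 b 2) && ((e4 b 1 < e4 a 1)%N ||
  ((e4 a 1 == e4 b 1) && (e4 b 0 < e4 a 0)%N))))).

Definition succ4 (a b : 'X_{1..4}) : bool :=
  (wt b < wt a)%N || ((wt a == wt b) && lexgt4 a b).

Definition deg_is (v : TP) (d : 'X_{1..4}) : Prop :=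
  d \in msupp v /\ (forall e, e \in msupp v -> e != d -> succ4 d e).

(* Main.v *)
Require Import Defs.
From mathcomp Require Import all_boot all_algebra.
From mathcomp Require Import mpoly.
From mathcomp Require Import ring lra zify.
Set Implicit Arguments. Unset Strict Implicit. Unset Printing Implicit Defensive.
Import GRing.Theory Num.Theory.
Local Open Scope ring_scope.


Definition alpha (c : CC) (a r : nat) : CC := ('C(a,r))%:R * (-c)^+(a-r).

Lemma expand1 (k : 'I_4) (c : CC) a :
  ('X_k - c%:MP : TP)^+a = \sum_(r < a.+1) (alpha c a r *: 'X_[U_(k) *+ r]).
Proof.
rewrite addrC exprDn; apply: eq_bigr => r _.
rewrite -mpolyXn -rmorphN -rmorphXn mul_mpolyC -scaler_nat scalerA mulrC /alpha.
by rewrite [X in X *: _]mulrC.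
Qed.

Lemma sum_delta N (k : nat) (F : nat -> CC) :
  \sum_(r < N) F r * ((r : nat) == k)%:R = (k < N)%:R * F k.
Proof.
elim: N => [|N IH]; first by rewrite big_ord0 mul0r.
rewrite big_ord_recr /= IH.
case: eqP => [E|NE].
- by rewrite -E ltnn ltnSn mul0r add0r mulr1 mul1r.
- rewrite mulr0 addr0 ltnS ltn_neqAle.
  by rewrite (_ : (k != N) = true) //; apply/eqP => E; apply: NE.
Qed.

Lemma alpha_big c a r : (a < r)%N -> alpha c a r = 0.
Proof. by move=> H; rewrite /alpha bin_small // mul0r. Qed.

Lemma sum_alpha c a (k : nat) : \sum_(r < a.+1) alpha c a r * ((r : nat) == k)%:R = alpha c a k.
Proof.
rewrite sum_delta; case: (ltnP k a.+1) => H; first by rewrite mul1r.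
by rewrite alpha_big ?mulr0 ?mul0r.
Qed.

Lemma alpha_ind c a k : (k < a.+1)%:R * alpha c a k = alpha c a k.
Proof.
case: (ltnP k a.+1) => H; first by rewrite mul1r.
by rewrite alpha_big ?mulr0 ?mul0r.
Qed.

Lemma alpha_indA c a k X : (k < a.+1)%:R * (alpha c a k * X) = alpha c a k * X.
Proof. by rewrite mulrA alpha_ind. Qed.

Definition lqc (cs : 4.-tuple CC) : 4.-tuple TP := [tuple 'X_i - (tnth cs i)%:MP | i < 4].

Lemma natb_and (a b : bool) : ((a && b)%:R : CC) = a%:R * b%:R.
Proof. by case: a; case: b; rewrite ?mulr1 ?mulr0 ?mul0r. Qed.


Definition freeof (k : 'I_4) (P : TP) := forall g : 'X_{1..4}, g k != 0%N -> P@_g = 0.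

Lemma coefMX_gen (Q : TP) u e : (Q * 'X_[u])@_e = if (u <= e)%MM then Q@_(e - u) else 0.
Proof.
case: ifP => H.
  by rewrite -{1}(submK H) addmC mcoeffMX.
apply/eqP; rewrite mcoeff_eq0; apply/negP => /msuppM_le /allpairsP [[m1 m2] [_ /=]].
rewrite msuppX inE => /eqP -> E; move: H; rewrite E lem_addl.
by [].
Qed.

Lemma coefSP k N (a : nat -> CC) (P : TP) e : freeof k P ->
  ((\sum_(r < N) a r *: 'X_[U_(k) *+ r]) * P)@_e =
  (e k < N)%:R * (a (e k) * P@_(e - U_(k) *+ e k)).
Proof.
move=> fP.
rewrite mulr_suml raddf_sum /= -(sum_delta N (e k) (fun r => a r * P@_(e - U_(k) *+ e k))).
apply: eq_bigr => r _.
rewrite -scalerAl mcoeffZ [X in X@__]mulrC coefMX_gen -mulrA.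
case: ifP => H.
- case: eqP => [->|NE]; first by rewrite mulr1.
  rewrite fP ?mulr0 //.
  move/mnm_lepP: H => /(_ k); rewrite mnmBE mulmnE mnm1E eqxx mul1n.
  rewrite subn_eq0 => H1; rewrite -ltnNge ltn_neqAle H1 andbT.
  by apply/eqP => E; apply: NE.
- case: eqP => [E|NE]; last by rewrite !mulr0.
  exfalso; move/negP: H; apply; apply/mnm_lepP => j.
  rewrite mulmnE mnm1E; case: eqP => [<-|_]; first by rewrite mul1n E.
  by rewrite mul0n.
Qed.

Lemma freeS k j N (a : nat -> CC) : k != j -> freeof k (\sum_(r < N) a r *: 'X_[U_(j) *+ r]).
Proof.
move=> kj g gk; rewrite raddf_sum big1 // => r _ /=.
rewrite mcoeffZ mcoeffX; case: eqP => [E|]; last by rewrite mulr0.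
move: gk; rewrite -E mulmnE mnm1E [j == k]eq_sym (negbTE kj) mul0n eqxx.
by [].
Qed.

Lemma freeM k (P Q : TP) : freeof k P -> freeof k Q -> freeof k (P * Q).
Proof.
move=> fP fQ g gk; apply/eqP; rewrite mcoeff_eq0; apply/negP.
move=> /msuppM_le /allpairsP [[m1 m2] [/= h1 h2 E]].
move: gk; rewrite E mnmDE.
have -> : m1 k = 0%N by apply/eqP; apply: contraLR h1 => /fP; rewrite mcoeff_msupp => ->; rewrite eqxx.
have -> : m2 k = 0%N by apply/eqP; apply: contraLR h2 => /fQ; rewrite mcoeff_msupp => ->; rewrite eqxx.
by [].
Qed.

Lemma free1 k : freeof k (1 : TP).
Proof.
move=> g gk; rewrite mcoeff1; case: eqP => // E; move: gk; rewrite E mnm0E.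
by [].
Qed.
Lemma coef_prod (cs : 4.-tuple CC) (d e : 'X_{1..4}) :
  (\prod_(i < 4) (tnth (lqc cs) i)^+(d i))@_e =
  \prod_(i < 4) alpha (tnth cs i) (d i) (e i).
Proof.
rewrite !big_ord_recl !big_ord0 /= /lqc !tnth_mktuple.
rewrite !expand1.
rewrite !coefSP; try by repeat apply: freeM; first [apply: free1 | apply: freeS].
rewrite !mnmBE !mulmnE !mnm1E /= !mul0n !subn0 !alpha_indA mcoeff1 mulr1.
set m := (X in X == 0%MM).
have -> : m = 0%MM.
  apply/mnmP => i; rewrite /m !mnmBE !mulmnE !mnm1E mnm0E.
  case: i => [[|[|[|[|i]]]] Hi] //=; rewrite !mul1n !mul0n !subn0.
  - by rewrite (_ : Ordinal Hi = ord0) ?subnn //; apply: val_inj.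
  - by rewrite (_ : Ordinal Hi = lift ord0 ord0) ?subnn //; apply: val_inj.
  - by rewrite (_ : Ordinal Hi = lift ord0 (lift ord0 ord0)) ?subnn //; apply: val_inj.
  - by rewrite (_ : Ordinal Hi = lift ord0 (lift ord0 (lift ord0 ord0))) ?subnn //; apply: val_inj.
by rewrite eqxx mulr1.
Qed.



Lemma alpha0 a r : alpha 0 a r = (a == r)%:R.
Proof.
rewrite /alpha oppr0 expr0n.
case: (eqVneq a r) => [->|NE]; first by rewrite subnn eqxx binn mulr1.
case: (ltnP a r) => H; first by rewrite bin_small // mul0r.
rewrite (_ : (a - r == 0)%N = false) ?mulr0 //.
apply/negP => /eqP; lia.
Qed.

Lemma alphann c a : alpha c a a = 1.
Proof. by rewrite /alpha binn subnn expr0 mulr1. Qed.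

Lemma alphaSn c a : alpha c a.+1 a = a.+1%:R * (- c).
Proof. by rewrite /alpha binSn subSnn expr1. Qed.

Lemma alpha_lt c a r : (a < r)%N -> alpha c a r = 0.
Proof. exact: alpha_big. Qed.

Lemma natbF : ((false : nat)%:R : CC) = 0. Proof. by []. Qed.
Lemma natbT : ((true : nat)%:R : CC) = 1. Proof. by []. Qed.

Ltac clean := rewrite ?natbF ?natbT ?andbF ?andFb ?andbT ?andTb ?mul0r ?mulr0 ?mul1r ?mulr1 ?add0r ?addr0.

Lemma Kval (c0 c1 : CC) (a0 a1 a2 a3 b0 b1 b2 b3 : nat) :
  (a0 + a1 + a2 + a3 <= (b0 + b1 + b2 + b3).+1)%N ->
  alpha c0 a0 b0 * (alpha c1 a1 b1 * (alpha 0 a2 b2 * alpha 0 a3 b3)) =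
  [&& a0 == b0, a1 == b1, a2 == b2 & a3 == b3]%:R
  + [&& a0 == b0.+1, a1 == b1, a2 == b2 & a3 == b3]%:R * (b0.+1%:R * (- c0))
  + [&& a0 == b0, a1 == b1.+1, a2 == b2 & a3 == b3]%:R * (b1.+1%:R * (- c1)).
Proof.
move=> H; rewrite !alpha0.
case: (eqVneq a2 b2) => [E2|N2]; last by rewrite ?andbF ?andFb natbF ?mul0r ?mulr0 ?mul0r ?addr0.
case: (eqVneq a3 b3) => [E3|N3]; last by rewrite ?andbF ?andFb natbF ?mul0r ?mulr0 ?mul0r ?addr0.
rewrite !natbT !mul1r !mulr1; subst a2 a3.
case: (ltnP a0 b0) => L0.
  rewrite alpha_lt //.
  rewrite (_ : (a0 == b0) = false); last by apply/negP => /eqP; lia.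
  rewrite (_ : (a0 == b0.+1) = false); last by apply/negP => /eqP; lia.
  by clean; clean.
case: (ltnP a1 b1) => L1.
  rewrite (alpha_lt _ L1).
  rewrite (_ : (a1 == b1) = false); last by apply/negP => /eqP; lia.
  rewrite (_ : (a1 == b1.+1) = false); last by apply/negP => /eqP; lia.
  by clean; clean.
have : (a0 = b0 /\ a1 = b1) \/ (a0 = b0.+1 /\ a1 = b1) \/ (a0 = b0 /\ a1 = b1.+1) by lia.
have F0 : (b0 == b0.+1) = false by apply/negP => /eqP; lia.
have F1 : (b1 == b1.+1) = false by apply/negP => /eqP; lia.
have F0' : (b0.+1 == b0) = false by apply/negP => /eqP; lia.
have F1' : (b1.+1 == b1) = false by apply/negP => /eqP; lia.
case=> [[-> ->]|[[-> ->]|[-> ->]]].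
- by rewrite !eqxx !alphann F0 F1; clean; clean.
- by rewrite !eqxx alphaSn alphann F0' F1; clean; clean.
- by rewrite !eqxx alphaSn alphann F0 F1'; clean; clean.
Qed.

Lemma inord0 : (inord 0 : 'I_4) = ord0. Proof. by apply: val_inj; rewrite /= inordK. Qed.
Lemma inord1 : (inord 1 : 'I_4) = lift ord0 ord0. Proof. by apply: val_inj; rewrite /= inordK. Qed.
Lemma inord2 : (inord 2 : 'I_4) = lift ord0 (lift ord0 ord0). Proof. by apply: val_inj; rewrite /= inordK. Qed.
Lemma inord3 : (inord 3 : 'I_4) = lift ord0 (lift ord0 (lift ord0 ord0)). Proof. by apply: val_inj; rewrite /= inordK. Qed.

Lemma e4_mk4 a b c d :
  [/\ e4 (mk4 a b c d) 0 = a, e4 (mk4 a b c d) 1 = b, e4 (mk4 a b c d) 2 = c & e4 (mk4 a b c d) 3 = d].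
Proof. by rewrite /e4 inord0 inord1 inord2 inord3. Qed.

Lemma mnm4_eq (x y : 'X_{1..4}) :
  (x == y) = [&& e4 x 0 == e4 y 0, e4 x 1 == e4 y 1, e4 x 2 == e4 y 2 & e4 x 3 == e4 y 3].
Proof.
rewrite /e4 inord0 inord1 inord2 inord3.
apply/eqP/and4P => [->|[/eqP h0 /eqP h1 /eqP h2 /eqP h3]]; first by [].
apply/mnmP => i; case: i => [[|[|[|[|i]]]] Hi] //.
- by rewrite (_ : Ordinal Hi = ord0) //; apply: val_inj.
- by rewrite (_ : Ordinal Hi = lift ord0 ord0) //; apply: val_inj.
- by rewrite (_ : Ordinal Hi = lift ord0 (lift ord0 ord0)) //; apply: val_inj.
- by rewrite (_ : Ordinal Hi = lift ord0 (lift ord0 (lift ord0 ord0))) //; apply: val_inj.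
Qed.

Lemma mcoeff_sumZ (s : seq 'X_{1..4}) (c : 'X_{1..4} -> CC) (P : 'X_{1..4} -> TP) e :
  (\sum_(d <- s) c d *: P d)@_e = \sum_(d <- s) c d * (P d)@_e.
Proof.
elim: s => [|x s IH]; first by rewrite !big_nil mcoeff0.
by rewrite !big_cons mcoeffD mcoeffZ IH.
Qed.

Lemma coef_comp (cs : 4.-tuple CC) (g : TP) e :
  (g \mPo lqc cs)@_e = \sum_(d <- msupp g) g@_d * \prod_(i < 4) alpha (tnth cs i) (d i) (e i).
Proof.
rewrite comp_mpolyE mcoeff_sumZ; apply: eq_bigr => d _.
by rewrite coef_prod.
Qed.


Definition cs1 (m : int) : 4.-tuple CC := [tuple 1; m%:~R; 0; 0].
Definition cs2 (m : int) : 4.-tuple CC := [tuple 0; 0; 1; m%:~R].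
Lemma tup1 (m : int) : lqc (cs1 m) = [tuple var 0 - 1; var 1 - m%:~R; var 2; var 3].
Proof.
apply: eq_from_tnth => i.
rewrite /lqc tnth_mktuple /var /cs1.
case: i => [[|[|[|[|i]]]] Hi]; rewrite !(tnth_nth 0) [RHS]/= [nth _ _ _]/=.
- by rewrite mpolyC1 (_ : Ordinal Hi = inord 0) //; apply: val_inj; rewrite /= inordK.
- by rewrite rmorph_int (_ : Ordinal Hi = inord 1) //; apply: val_inj; rewrite /= inordK.
- by rewrite mpolyC0 subr0 (_ : Ordinal Hi = inord 2) //; apply: val_inj; rewrite /= inordK.
- by rewrite mpolyC0 subr0 (_ : Ordinal Hi = inord 3) //; apply: val_inj; rewrite /= inordK.
- by [].
Qed.
Lemma tup2 (m : int) : lqc (cs2 m) = [tuple var 0; var 1; var 2 - 1; var 3 - m%:~R].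
Proof.
apply: eq_from_tnth => i.
rewrite /lqc tnth_mktuple /var /cs2.
case: i => [[|[|[|[|i]]]] Hi]; rewrite !(tnth_nth 0) [RHS]/= [nth _ _ _]/=.
- by rewrite mpolyC0 subr0 (_ : Ordinal Hi = inord 0) //; apply: val_inj; rewrite /= inordK.
- by rewrite mpolyC0 subr0 (_ : Ordinal Hi = inord 1) //; apply: val_inj; rewrite /= inordK.
- by rewrite mpolyC1 (_ : Ordinal Hi = inord 2) //; apply: val_inj; rewrite /= inordK.
- by rewrite rmorph_int (_ : Ordinal Hi = inord 3) //; apply: val_inj; rewrite /= inordK.
- by [].
Qed.
Lemma shift1_eq (m : int) (g : TP) : shift1 m g = g \mPo lqc (cs1 m).
Proof. by rewrite tup1. Qed.
Lemma shift2_eq (m : int) (g : TP) : shift2 m g = g \mPo lqc (cs2 m).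
Proof. by rewrite tup2. Qed.

Lemma swap4 (a b c d : CC) : a * (b * (c * d)) = c * (d * (a * b)).
Proof. ring. Qed.

Lemma Kprod1 m (d e : 'X_{1..4}) :
  \prod_(i < 4) alpha (tnth (cs1 m) i) (d i) (e i) =
  alpha 1 (e4 d 0) (e4 e 0) * (alpha (m%:~R) (e4 d 1) (e4 e 1) *
    (alpha 0 (e4 d 2) (e4 e 2) * alpha 0 (e4 d 3) (e4 e 3))).
Proof.
rewrite !big_ord_recl big_ord0 mulr1 /e4 inord0 inord1 inord2 inord3.
by rewrite !(tnth_nth 0) /cs1.
Qed.

Lemma Kprod2 m (d e : 'X_{1..4}) :
  \prod_(i < 4) alpha (tnth (cs2 m) i) (d i) (e i) =
  alpha 1 (e4 d 2) (e4 e 2) * (alpha (m%:~R) (e4 d 3) (e4 e 3) *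
    (alpha 0 (e4 d 0) (e4 e 0) * alpha 0 (e4 d 1) (e4 e 1))).
Proof.
rewrite !big_ord_recl big_ord0 mulr1 /e4 inord0 inord1 inord2 inord3.
rewrite !(tnth_nth 0) /cs2 /=.
by rewrite swap4.
Qed.

Lemma sum_supp_delta (g : TP) a :
  \sum_(d <- msupp g) g@_d * (d == a)%:R = g@_a.
Proof.
case: (boolP (a \in msupp g)) => H.
  rewrite (bigD1_seq a) ?msupp_uniq // eqxx mulr1 big1 /=; first by rewrite addr0.
  by move=> i /negbTE ->; rewrite mulr0.
rewrite big1_seq; last first.
  by move=> i /= Hi; rewrite (_ : (i == a) = false) ?mulr0 //; apply/negP => /eqP E; move: H; rewrite -E Hi.
by apply/esym/eqP; rewrite mcoeff_eq0.
Qed.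

Lemma sum3 (s : seq 'X_{1..4}) (A B C : 'X_{1..4} -> CC) :
  \sum_(d <- s) (A d + B d + C d) = \sum_(d <- s) A d + \sum_(d <- s) B d + \sum_(d <- s) C d.
Proof.
elim: s => [|u s IH]; first by rewrite !big_nil !addr0.
rewrite !big_cons IH; ring.
Qed.

Lemma sumMr (s : seq 'X_{1..4}) (A : 'X_{1..4} -> CC) x :
  \sum_(d <- s) (A d * x) = (\sum_(d <- s) A d) * x.
Proof.
elim: s => [|u s IH]; first by rewrite !big_nil mul0r.
by rewrite !big_cons IH mulrDl.
Qed.

Lemma sum_supp3 (g : TP) (K : 'X_{1..4} -> CC) a b c x y z :
  (forall d, d \in msupp g -> K d = (d == a)%:R * x + (d == b)%:R * y + (d == c)%:R * z) ->
  \sum_(d <- msupp g) g@_d * K d = g@_a * x + g@_b * y + g@_c * z.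
Proof.
move=> HK.
rewrite (eq_big_seq (fun d => (g@_d * (d == a)%:R) * x + (g@_d * (d == b)%:R) * y + (g@_d * (d == c)%:R) * z)); last first.
  by move=> d Hd; rewrite HK // !mulrDr !mulrA.
by rewrite sum3 !sumMr !sum_supp_delta.
Qed.

Lemma e4mk0 a b c d : e4 (mk4 a b c d) 0 = a. Proof. by rewrite /e4 inord0. Qed.
Lemma e4mk1 a b c d : e4 (mk4 a b c d) 1 = b. Proof. by rewrite /e4 inord1. Qed.
Lemma e4mk2 a b c d : e4 (mk4 a b c d) 2 = c. Proof. by rewrite /e4 inord2. Qed.
Lemma e4mk3 a b c d : e4 (mk4 a b c d) 3 = d. Proof. by rewrite /e4 inord3. Qed.

Definition p0 e := mk4 (e4 e 0).+1 (e4 e 1) (e4 e 2) (e4 e 3).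
Definition p1 e := mk4 (e4 e 0) (e4 e 1).+1 (e4 e 2) (e4 e 3).
Definition p2 e := mk4 (e4 e 0) (e4 e 1) (e4 e 2).+1 (e4 e 3).
Definition p3 e := mk4 (e4 e 0) (e4 e 1) (e4 e 2) (e4 e 3).+1.

Lemma coef_shift1 m (g : TP) e : (forall d, d \in msupp g -> (wt d <= (wt e).+1)%N) ->
  (shift1 m g)@_e = g@_e * 1 + g@_(p0 e) * ((e4 e 0).+1%:R * - 1)
                    + g@_(p1 e) * ((e4 e 1).+1%:R * - m%:~R).
Proof.
move=> Hw; rewrite shift1_eq coef_comp; apply: sum_supp3 => d Hd.
rewrite Kprod1 Kval; last by move: (Hw d Hd); rewrite /wt.
by rewrite !mnm4_eq /p0 /p1 !e4mk0 !e4mk1 !e4mk2 !e4mk3 mulr1.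
Qed.

Lemma and4_rot (a b c d : bool) : [&& c, d, a & b] = [&& a, b, c & d].
Proof. by case: a; case: b; case: c; case: d. Qed.

Lemma coef_shift2 m (g : TP) e : (forall d, d \in msupp g -> (wt d <= (wt e).+1)%N) ->
  (shift2 m g)@_e = g@_e * 1 + g@_(p2 e) * ((e4 e 2).+1%:R * - 1)
                    + g@_(p3 e) * ((e4 e 3).+1%:R * - m%:~R).
Proof.
move=> Hw; rewrite shift2_eq coef_comp; apply: sum_supp3 => d Hd.
rewrite Kprod2 Kval; last by move: (Hw d Hd); rewrite /wt; lia.
by rewrite !mnm4_eq /p2 /p3 !e4mk0 !e4mk1 !e4mk2 !e4mk3 !(and4_rot (e4 d 0 == e4 e 0)) mulr1.
Qed.


Lemma supp_wt (v : TP) D d : deg_is v D -> d \in msupp v -> (wt d <= wt D)%N.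
Proof.
case=> _ H Hd; case: (eqVneq d D) => [->//|NE].
move: (H d Hd NE); rewrite /succ4; lia.
Qed.

Lemma above_zero (v : TP) D e : deg_is v D -> succ4 e D -> v@_e = 0.
Proof.
case=> _ H He; apply/eqP; rewrite mcoeff_eq0; apply/negP => Hin.
case: (eqVneq e D) => [E|NE].
  by move: He; rewrite E /succ4 /lexgt4; lia.
move: (H e Hin NE) He; rewrite /succ4 /lexgt4; lia.
Qed.

Lemma Rval (A B : CC) m (v : TP) D e : deg_is v D -> (wt D <= (wt e).+1)%N ->
  (A *: shift1 m v + B *: shift2 m v - A *: v - B *: v)@_e =
  A * (v@_(p0 e) * ((e4 e 0).+1%:R * - 1) + v@_(p1 e) * ((e4 e 1).+1%:R * - m%:~R))
  + B * (v@_(p2 e) * ((e4 e 2).+1%:R * - 1) + v@_(p3 e) * ((e4 e 3).+1%:R * - m%:~R)).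
Proof.
move=> hd hw.
have Hw : forall d, d \in msupp v -> (wt d <= (wt e).+1)%N.
  by move=> d Hd; apply: leq_trans hw; apply: supp_wt hd Hd.
have h1 := coef_shift1 m Hw; have h2 := coef_shift2 m Hw.
move: (shift1 m v) (shift2 m v) h1 h2 => S1 S2 h1 h2.
rewrite !mcoeffB mcoeffD !mcoeffZ h1 h2.
ring.
Qed.

Lemma total4 (e f : 'X_{1..4}) : e != f -> succ4 f e || succ4 e f.
Proof.
rewrite mnm4_eq /succ4 /lexgt4 /wt. lia.
Qed.

Lemma deg_from (R : TP) f : R@_f != 0 -> (forall e, succ4 e f -> R@_e = 0) -> deg_is R f.
Proof.
move=> Hf Hz; split; first by rewrite mcoeff_msupp.
move=> e He NE; case/orP: (total4 NE) => // H.
by move: He; rewrite mcoeff_msupp Hz // eqxx.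
Qed.


Definition Rform (A B : CC) (m : int) (v : TP) (e : 'X_{1..4}) : CC :=
  A * (v@_(p0 e) * ((e4 e 0).+1%:R * - 1) + v@_(p1 e) * ((e4 e 1).+1%:R * - m%:~R))
  + B * (v@_(p2 e) * ((e4 e 2).+1%:R * - 1) + v@_(p3 e) * ((e4 e 3).+1%:R * - m%:~R)).

Lemma main_gen (A B : CC) m (v : TP) D f : deg_is v D -> wt D = (wt f).+1 ->
  (forall e, succ4 e f -> [/\ succ4 (p0 e) D, succ4 (p1 e) D, succ4 (p2 e) D & succ4 (p3 e) D]) ->
  Rform A B m v f != 0 ->
  deg_is (A *: shift1 m v + B *: shift2 m v - A *: v - B *: v) f.
Proof.
move=> hd hw hord hnz; apply: deg_from.
  by rewrite (Rval _ _ _ hd) ?hw.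
move=> e he; rewrite (Rval _ _ _ hd); last first.
  by move: he; rewrite hw /succ4; lia.
case: (hord e he) => h0 h1 h2 h3.
by rewrite !(above_zero hd) // !mul0r !addr0 !mulr0 addr0.
Qed.

Ltac crunch := rewrite /succ4 /lexgt4 /wt /p0 /p1 /p2 /p3 ?e4mk0 ?e4mk1 ?e4mk2 ?e4mk3; lia.

Lemma beta_nz (v : TP) D : deg_is v D -> v@_D != 0.
Proof. by case=> h _; rewrite -mcoeff_msupp. Qed.

Lemma case1 (l1 l2 s1 s2 : CC) (hs1 : s1 != 0) (v : TP) p q s t :
  deg_is v (mk4 p.+1 q s t) ->
  deg_is (actI l1 s1 l2 s2 0 v - s1 *: v - s2 *: v) (mk4 p q s t).
Proof.
move=> hd.
rewrite /actI expr0z !mul1r.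
apply: (@main_gen s1 s2 0 v _ (mk4 p q s t) hd).
- by rewrite /wt !e4mk0 !e4mk1 !e4mk2 !e4mk3; lia.
- by move=> e he; split; move: he; crunch.
rewrite /Rform.
have -> : p0 (mk4 p q s t) = mk4 p.+1 q s t by rewrite /p0 !e4mk0 !e4mk1 !e4mk2 !e4mk3.
rewrite [v@_(p2 _)](above_zero hd); last by crunch.
rewrite [v@_(p3 _)](above_zero hd); last by crunch.
rewrite !e4mk0 (_ : (0:int)%:~R = 0 :> CC) //.
have hb := beta_nz hd.
have -> : s1 * (v@_(mk4 p.+1 q s t) * (p.+1%:R * -1) + v@_(p1 (mk4 p q s t)) * ((e4 (mk4 p q s t) 1).+1%:R * - 0)) +
  s2 * (0 * ((e4 (mk4 p q s t) 2).+1%:R * -1) + 0 * ((e4 (mk4 p q s t) 3).+1%:R * - 0)) =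
  - (s1 * (v@_(mk4 p.+1 q s t) * p.+1%:R)) by ring.
by rewrite oppr_eq0 !mulf_neq0 // pnatr_eq0.
Qed.

Definition hordP D f := forall e, succ4 e f ->
  [/\ succ4 (p0 e) D, succ4 (p1 e) D, succ4 (p2 e) D & succ4 (p3 e) D].

Lemma caseg (l1 l2 s1 s2 : CC) (v : TP) D f (m : int) :
  deg_is v D -> wt D = (wt f).+1 -> hordP D f ->
  Rform (l1 ^ m * s1) (l2 ^ m * s2) m v f != 0 ->
  deg_is (actI l1 s1 l2 s2 m v - (l1 ^ m * s1) *: v - (l2 ^ m * s2) *: v) f.
Proof.
move=> hd hw ho hnz; rewrite /actI.
exact: (@main_gen (l1 ^ m * s1) (l2 ^ m * s2) m v D f hd hw ho hnz).
Qed.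

Lemma intrn (n : nat) : (n%:Z)%:~R = n%:R :> CC. Proof. by []. Qed.

Lemma case2 (l1 l2 s1 s2 : CC) (hl1 : l1 != 0) (hs1 : s1 != 0) (v : TP) q s t :
  deg_is v (mk4 0 q.+1 s t) -> exists m : int,
  deg_is (actI l1 s1 l2 s2 m v - (l1 ^ m * s1) *: v - (l2 ^ m * s2) *: v) (mk4 0 q s t).
Proof.
move=> hd.
have hw : wt (mk4 0 q.+1 s t) = (wt (mk4 0 q s t)).+1 by rewrite /wt !e4mk0 !e4mk1 !e4mk2 !e4mk3; lia.
have ho : hordP (mk4 0 q.+1 s t) (mk4 0 q s t) by move=> e he; split; move: he; crunch.
have hb := beta_nz hd.
set a := v@_(p0 (mk4 0 q s t)).
have RF : forall n : nat, Rform (l1 ^ (n%:Z) * s1) (l2 ^ (n%:Z) * s2) (n%:Z) v (mk4 0 q s t) =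
    - (l1 ^+ n * s1 * (a + v@_(mk4 0 q.+1 s t) * q.+1%:R * n%:R)).
  move=> n; rewrite /Rform intrn -!exprnP.
  have -> : p1 (mk4 0 q s t) = mk4 0 q.+1 s t by rewrite /p1 !e4mk0 !e4mk1 !e4mk2 !e4mk3.
  rewrite [v@_(p2 _)](above_zero hd); last by crunch.
  rewrite [v@_(p3 _)](above_zero hd); last by crunch.
  rewrite !e4mk0 !e4mk1 -/a; ring.
case: (eqVneq a 0) => Ha.
- exists (1%:Z); apply: (@caseg l1 l2 s1 s2 v _ _ (1%:Z) hd hw ho).
  by rewrite RF Ha expr1 oppr_eq0 !mulf_neq0 // ?add0r ?mulr1 ?mulf_neq0 // pnatr_eq0.
- exists (0%:Z); apply: (@caseg l1 l2 s1 s2 v _ _ (0%:Z) hd hw ho).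
  by rewrite RF expr0 mulr0 addr0 mul1r oppr_eq0 mulf_neq0.
Qed.

Lemma case3 (l1 l2 s1 s2 : CC) (hl : l1 != l2) (hs2 : s2 != 0) (v : TP) s t :
  deg_is v (mk4 0 0 s.+1 t) -> exists m : int,
  deg_is (actI l1 s1 l2 s2 m v - (l1 ^ m * s1) *: v - (l2 ^ m * s2) *: v) (mk4 0 0 s t).
Proof.
move=> hd.
have hw : wt (mk4 0 0 s.+1 t) = (wt (mk4 0 0 s t)).+1 by rewrite /wt !e4mk0 !e4mk1 !e4mk2 !e4mk3; lia.
have ho : hordP (mk4 0 0 s.+1 t) (mk4 0 0 s t) by move=> e he; split; move: he; crunch.
have hb := beta_nz hd.
set a := v@_(p0 (mk4 0 0 s t)).
set b := v@_(p1 (mk4 0 0 s t)).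
set c := v@_(mk4 0 0 s.+1 t) * s.+1%:R.
have RF : forall n : nat, Rform (l1 ^ (n%:Z) * s1) (l2 ^ (n%:Z) * s2) (n%:Z) v (mk4 0 0 s t) =
    - (l1 ^+ n * s1 * (a + b * n%:R) + l2 ^+ n * s2 * c).
  move=> n; rewrite /Rform intrn -!exprnP.
  have -> : p2 (mk4 0 0 s t) = mk4 0 0 s.+1 t by rewrite /p2 !e4mk0 !e4mk1 !e4mk2 !e4mk3.
  rewrite [v@_(p3 _)](above_zero hd); last by crunch.
  rewrite !e4mk0 !e4mk1 !e4mk2 -/a -/b /c; ring.
have [H0|H0] := eqVneq (Rform (l1 ^ (0%N%:Z) * s1) (l2 ^ (0%N%:Z) * s2) (0%N%:Z) v (mk4 0 0 s t)) 0; last first.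
  by exists (0%N%:Z); apply: (@caseg l1 l2 s1 s2 v _ _ (0%N%:Z) hd hw ho).
have [H1|H1] := eqVneq (Rform (l1 ^ (1%N%:Z) * s1) (l2 ^ (1%N%:Z) * s2) (1%N%:Z) v (mk4 0 0 s t)) 0; last first.
  by exists (1%N%:Z); apply: (@caseg l1 l2 s1 s2 v _ _ (1%N%:Z) hd hw ho).
have [H2|H2] := eqVneq (Rform (l1 ^ (2%N%:Z) * s1) (l2 ^ (2%N%:Z) * s2) (2%N%:Z) v (mk4 0 0 s t)) 0; last first.
  by exists (2%N%:Z); apply: (@caseg l1 l2 s1 s2 v _ _ (2%N%:Z) hd hw ho).
exfalso.
have Id : l1 ^+ 2 * (- (l1 ^+ 0 * s1 * (a + b * 0%:R) + l2 ^+ 0 * s2 * c))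
   - 2%:R * l1 * (- (l1 ^+ 1 * s1 * (a + b * 1%:R) + l2 ^+ 1 * s2 * c))
   + (- (l1 ^+ 2 * s1 * (a + b * 2%:R) + l2 ^+ 2 * s2 * c))
   = - (s2 * c * (l2 - l1) ^+ 2) by ring.
move: Id; rewrite -(RF 0%N) -(RF 1%N) -(RF 2%N) H0 H1 H2 !mulr0 ?subr0 ?addr0 ?subr0 => /eqP; apply/negP.
rewrite eq_sym oppr_eq0 /c.
have n1 : s.+1%:R != 0 :> CC by rewrite pnatr_eq0.
have n3 : l2 - l1 != 0 by rewrite subr_eq0 eq_sym.
by repeat apply: mulf_neq0.
Qed.

Lemma case4 (l1 l2 s1 s2 : CC) (hl2 : l2 != 0) (hl : l1 != l2) (hs2 : s2 != 0) (v : TP) t :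
  deg_is v (mk4 0 0 0 t.+1) -> exists m : int,
  deg_is (actI l1 s1 l2 s2 m v - (l1 ^ m * s1) *: v - (l2 ^ m * s2) *: v) (mk4 0 0 0 t).
Proof.
move=> hd.
have hw : wt (mk4 0 0 0 t.+1) = (wt (mk4 0 0 0 t)).+1 by rewrite /wt !e4mk0 !e4mk1 !e4mk2 !e4mk3; lia.
have ho : hordP (mk4 0 0 0 t.+1) (mk4 0 0 0 t) by move=> e he; split; move: he; crunch.
have hb := beta_nz hd.
set a := v@_(p0 (mk4 0 0 0 t)).
set b := v@_(p1 (mk4 0 0 0 t)).
set c := v@_(p2 (mk4 0 0 0 t)).
set g := v@_(mk4 0 0 0 t.+1) * t.+1%:R.
have RF : forall n : nat, Rform (l1 ^ (n%:Z) * s1) (l2 ^ (n%:Z) * s2) (n%:Z) v (mk4 0 0 0 t) =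
    - (l1 ^+ n * s1 * (a + b * n%:R) + l2 ^+ n * s2 * (c + g * n%:R)).
  move=> n; rewrite /Rform intrn -!exprnP.
  have -> : p3 (mk4 0 0 0 t) = mk4 0 0 0 t.+1 by rewrite /p3 !e4mk0 !e4mk1 !e4mk2 !e4mk3.
  rewrite !e4mk0 !e4mk1 !e4mk2 !e4mk3 -/a -/b -/c /g; ring.
have [H0|H0] := eqVneq (Rform (l1 ^ (0%N%:Z) * s1) (l2 ^ (0%N%:Z) * s2) (0%N%:Z) v (mk4 0 0 0 t)) 0; last first.
  by exists (0%N%:Z); apply: (@caseg l1 l2 s1 s2 v _ _ (0%N%:Z) hd hw ho).
have [H1|H1] := eqVneq (Rform (l1 ^ (1%N%:Z) * s1) (l2 ^ (1%N%:Z) * s2) (1%N%:Z) v (mk4 0 0 0 t)) 0; last first.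
  by exists (1%N%:Z); apply: (@caseg l1 l2 s1 s2 v _ _ (1%N%:Z) hd hw ho).
have [H2|H2] := eqVneq (Rform (l1 ^ (2%N%:Z) * s1) (l2 ^ (2%N%:Z) * s2) (2%N%:Z) v (mk4 0 0 0 t)) 0; last first.
  by exists (2%N%:Z); apply: (@caseg l1 l2 s1 s2 v _ _ (2%N%:Z) hd hw ho).
have [H3|H3] := eqVneq (Rform (l1 ^ (3%N%:Z) * s1) (l2 ^ (3%N%:Z) * s2) (3%N%:Z) v (mk4 0 0 0 t)) 0; last first.
  by exists (3%N%:Z); apply: (@caseg l1 l2 s1 s2 v _ _ (3%N%:Z) hd hw ho).
exfalso.
have Id : (- (l1 ^+ 3 * s1 * (a + b * 3%:R) + l2 ^+ 3 * s2 * (c + g * 3%:R)))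
   - (2%:R * l1 + l2) * (- (l1 ^+ 2 * s1 * (a + b * 2%:R) + l2 ^+ 2 * s2 * (c + g * 2%:R)))
   + (l1 ^+ 2 + 2%:R * l1 * l2) * (- (l1 ^+ 1 * s1 * (a + b * 1%:R) + l2 ^+ 1 * s2 * (c + g * 1%:R)))
   - l1 ^+ 2 * l2 * (- (l1 ^+ 0 * s1 * (a + b * 0%:R) + l2 ^+ 0 * s2 * (c + g * 0%:R)))
   = - (s2 * g * l2 * (l2 - l1) ^+ 2) by ring.
move: Id; rewrite -(RF 0%N) -(RF 1%N) -(RF 2%N) -(RF 3%N) H0 H1 H2 H3 !mulr0 ?subr0 ?addr0 ?subr0 ?addr0 ?subr0 => /eqP; apply/negP.
rewrite eq_sym oppr_eq0 /g.
have n1 : t.+1%:R != 0 :> CC by rewrite pnatr_eq0.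
have n3 : l2 - l1 != 0 by rewrite subr_eq0 eq_sym.
by repeat apply: mulf_neq0.
Qed.


Unset Implicit Arguments.

Theorem lemma4p1 (l1 l2 s1 s2 : CC) (e1 e2 : CC)
  (hl1 : l1 != 0) (hl2 : l2 != 0) (hs1 : s1 != 0) (hs2 : s2 != 0)
  (hl : l1 != l2) (v : TP) (hv : v != 0) (p q s t : nat)
  (hdeg : deg_is v (mk4 p q s t)) :
  [/\ (0 < p)%N ->
        deg_is (actI l1 s1 l2 s2 0 v - s1 *: v - s2 *: v) (mk4 p.-1 q s t),
      p = 0%N -> (0 < q)%N ->
        exists m : int,
          deg_is (actI l1 s1 l2 s2 m v - (l1 ^ m * s1) *: v - (l2 ^ m * s2) *: v)
                 (mk4 0 q.-1 s t),
      p = 0%N -> q = 0%N -> (0 < s)%N ->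
        exists m : int,
          deg_is (actI l1 s1 l2 s2 m v - (l1 ^ m * s1) *: v - (l2 ^ m * s2) *: v)
                 (mk4 0 0 s.-1 t)
    & p = 0%N -> q = 0%N -> s = 0%N -> (0 < t)%N ->
        exists m : int,
          deg_is (actI l1 s1 l2 s2 m v - (l1 ^ m * s1) *: v - (l2 ^ m * s2) *: v)
                 (mk4 0 0 0 t.-1)].
Proof.
split.
- case: p hdeg => [|p] hd // _; exact: case1.
- move=> hp; subst p; case: q hdeg => [|q] hd // _; exact: case2.
- move=> hp hq; subst p q; case: s hdeg => [|s] hd // _; exact: case3.
- move=> hp hq hs; subst p q s; case: t hdeg => [|t] hd // _; exact: case4.
Qed.
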